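(* Let $1\to K\to G\xrightarrow{p} Q\to 1$ be an exact sequence of groups (so $p:G\to Q$ is a surjection with kernel $K$), and assume every non-trivial element of $K$ is a generalized torsion element of $G$. Then a non-trivial element $g\in G$ is a generalized torsion element of $G$ if and only if either $p(g)=1$ or $p(g)$ is a generalized torsion element of $Q$.
   Context: For $g,x$ in a group, $g^{x}:=xgx^{-1}$. A non-trivial element $g$ of a group $G$ is a generalized torsion element (of $G$) if there exist a positive integer $n$ and $x_1,\ldots,x_n\in G$ with $g^{x_1}g^{x_2}\cdots g^{x_n}=1$. *)

(* Defs.v *)
From HB Require Import structures.
From mathcomp Require Import all_boot.
From mathcomp Require Import monoid.

Set Implicit Arguments.
Unset Strict Implicit.
Unset Printing Implicit Defensive.

Local Open Scope group_scope.

(* Paper's conjugation convention: g^x := x g x^-1. *)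
Definition pconj (G : groupType) (g x : G) : G := x * g * x^-1.

Definition conj_prod (G : groupType) (g : G) (s : seq G) : G :=
  foldr (fun x acc => pconj g x * acc) 1 s.

Definition gen_torsion (G : groupType) (g : G) : Prop :=
  g <> 1 /\ exists s : seq G, 0 < size s /\ conj_prod g s = 1.

(* Main.v *)
Require Import Defs.
From HB Require Import structures.
From mathcomp Require Import all_boot.
From mathcomp Require Import monoid.

Local Open Scope group_scope.

Section Aux.
Variable G : groupType.

Lemma conj_prod_cat (g : G) s1 s2 :
  conj_prod g (s1 ++ s2) = conj_prod g s1 * conj_prod g s2.
Proof.
elim: s1 => [|x s IH] /=; first by rewrite mul1g.
by rewrite IH mulgA.
Qed.

Lemma pconj_prod (g y : G) s :
  pconj (conj_prod g s) y = conj_prod g (map (fun x => y * x) s).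
Proof.
elim: s => [|x s IH] /=; rewrite /pconj.
  by rewrite mulg1 mulgV.
rewrite -IH /pconj invgM !mulgA.
by rewrite -(mulgA _ y^-1 y) mulVg mulg1.
Qed.

Lemma conj_prod_flatten (g : G) s t :
  conj_prod (conj_prod g s) t =
  conj_prod g (flatten [seq map (fun x => y * x) s | y <- t]).
Proof.
elim: t => [|y t IH] //=.
by rewrite conj_prod_cat IH pconj_prod.
Qed.
End Aux.

Theorem theorem1p4 (G Q : groupType) (p : G -> Q)
  (p_mul : {morph p : x y / x * y})
  (p_surj : forall q : Q, exists g : G, p g = q)
  (hK : forall k : G, p k = 1 -> k <> 1 -> gen_torsion k) :
  forall g : G, g <> 1 -> (gen_torsion g <-> (p g = 1 \/ gen_torsion (p g))).
Proof.
have p1 : p 1 = 1.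
  have h : p 1 * p 1 = p 1 * 1 by rewrite -p_mul !mulg1.
  exact: mulgI h.
have pV : forall x, p x^-1 = (p x)^-1.
  move=> x; apply/esym/mulg1_eq; by rewrite -p_mul mulgV.
have pconjP : forall g x, p (pconj g x) = pconj (p g) (p x).
  by move=> g x; rewrite /pconj !p_mul pV.
have pprod : forall g s, p (conj_prod g s) = conj_prod (p g) (map p s).
  move=> g; elim=> [|x s IH] //=; by rewrite p_mul pconjP IH.
move=> g g1; split.
  move=> [_ [s [s0 hs]]].
  case: (eqVneq (p g) 1) => [->|pg1]; first by left.
  right; split; first by apply/eqP.
  exists (map p s); rewrite size_map; split => //.
  by rewrite -pprod hs p1.
case=> [pg|[_ [s' [s0 hs]]]]; first exact: hK.
have [s [es ss]] : exists s, map p s = s' /\ size s = size s'.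
  elim: s' {s0 hs} => [|q s' [s [es ss]]]; first by exists [::].
  have [x hx] := p_surj q.
  by exists (x :: s); rewrite /= es hx ss.
set k := conj_prod g s.
have pk : p k = 1 by rewrite /k pprod es.
case: (eqVneq k 1) => [k1|kn1].
  split => //; exists s; by rewrite ss.
have [_ [t [t0 ht]]] := hK k pk (elimN eqP kn1).
split => //.
exists (flatten [seq map (fun x => y * x) s | y <- t]); split.
  case: t t0 {ht} => [|y t] //= _.
  by rewrite size_cat size_map ss; case: (size s') s0.
by rewrite -conj_prod_flatten.
Qed.
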